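(* Let $A,B\in\mathrm{SL}_2\mathbb{Z}$ be noncommuting, well oriented, with $2\le\mathrm{tr}(A)<\mathrm{tr}(B)$ and $\mathrm{tr}(AB)>\mathrm{tr}(B^2)$. Then the integers $\mathrm{tr}((AB)^3)$ and $\mathrm{tr}((AB^2)^2)$ differ by at least $2$.
   Context: Fixed points are for the Möbius action on $\partial\mathcal{H}=\mathbb{P}^1\mathbb{R}$; $\alpha^\pm$ ($\beta^\pm$) are the attracting/repelling fixed points of $A$ ($B$), both equal to the unique fixed point if parabolic. With $\partial\mathcal{H}$ cyclically ordered and $[\alpha,\beta]$ the closed counterclockwise interval from $\alpha$ to $\beta$, let $I^+=\{\alpha^+\}$ if $\alpha^+=\beta^+$, and otherwise the one of $[\alpha^+,\beta^+],[\beta^+,\alpha^+]$ mapped into itself by both $A$ and $B$ (if it exists); define $I^-$ likewise with $A^{-1},B^{-1},\alpha^-,\beta^-$. The pair is coherently oriented if both exist, and well oriented if $A,B$ is coherently oriented but $A,B^{-1}$ is not. *)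

(* Defs.v *)
From HB Require Import structures.
From mathcomp Require Import all_boot all_order all_algebra.
From Stdlib Require Import Rdefinitions.
From mathcomp Require Import Rstruct.

Set Implicit Arguments.
Unset Strict Implicit.
Unset Printing Implicit Defensive.

Import Order.TTheory GRing.Theory Num.Theory.
Local Open Scope ring_scope.

Definition SL2Z (M : 'M[int]_2) : Prop := \det M = 1.

(* The boundary of the upper half plane, P^1(R) = R u {oo}:
   [Some x] is the real point x, [None] is the point at infinity. *)
Definition P1R := option R.

Definition ma (M : 'M[int]_2) : R := (M 0 0)%:~R.
Definition mb (M : 'M[int]_2) : R := (M 0 1)%:~R.
Definition mc (M : 'M[int]_2) : R := (M 1 0)%:~R.
Definition md (M : 'M[int]_2) : R := (M 1 1)%:~R.

Definition hom (p : P1R) : R * R :=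
  match p with Some x => (x, 1) | None => (1, 0) end.

Definition moebius (M : 'M[int]_2) (p : P1R) : P1R :=
  let: (x, y) := hom p in
  let x' := ma M * x + mb M * y in
  let y' := mc M * x + md M * y in
  if y' == 0 then None else Some (x' / y').

Definition fixed_with (M : 'M[int]_2) (p : P1R) (l : R) : Prop :=
  let: (x, y) := hom p in
  ma M * x + mb M * y = l * x /\ mc M * x + md M * y = l * y.

Definition fixed_point (M : 'M[int]_2) (p : P1R) : Prop :=
  moebius M p = p.

(* Attracting fixed point: a fixed point whose eigenvalue has maximal
   absolute value among the eigenvalues of all fixed points (for a
   parabolic element the unique fixed point is both attracting and
   repelling). *)
Definition attracting_fp (M : 'M[int]_2) (p : P1R) : Prop :=
  fixed_point M p /\
  exists l, fixed_with M p l /\ forall q m, fixed_with M q m -> `|m| <= `|l|.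

Definition repelling_fp (M : 'M[int]_2) (p : P1R) : Prop :=
  fixed_point M p /\
  exists l, fixed_with M p l /\ forall q m, fixed_with M q m -> `|l| <= `|m|.

(* The closed counterclockwise interval [a, b] of P^1(R) = boundary of H
   (counterclockwise = increasing direction on R, then through oo). *)
Definition ccw_interval (a b : P1R) (p : P1R) : bool :=
  match a, b with
  | Some x, Some y =>
      if x <= y then (match p with Some z => x <= z <= y | None => false end)
      else (match p with Some z => (x <= z) || (z <= y) | None => true end)
  | Some x, None => match p with Some z => x <= z | None => true end
  | None, Some y => match p with Some z => z <= y | None => true end
  | None, None => p == None
  end.

Definition maps_into_itself (M : 'M[int]_2) (I : P1R -> bool) : Prop :=
  forall p, I p -> I (moebius M p).

Definition I_plus_exists (A B : 'M[int]_2) : Prop :=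
  exists ap bp, attracting_fp A ap /\ attracting_fp B bp /\
    (ap = bp \/
     (ap <> bp /\
      ((maps_into_itself A (ccw_interval ap bp) /\
        maps_into_itself B (ccw_interval ap bp)) \/
       (maps_into_itself A (ccw_interval bp ap) /\
        maps_into_itself B (ccw_interval bp ap))))).

Definition I_minus_exists (A B : 'M[int]_2) : Prop :=
  exists am bm, repelling_fp A am /\ repelling_fp B bm /\
    (am = bm \/
     (am <> bm /\
      ((maps_into_itself (invmx A) (ccw_interval am bm) /\
        maps_into_itself (invmx B) (ccw_interval am bm)) \/
       (maps_into_itself (invmx A) (ccw_interval bm am) /\
        maps_into_itself (invmx B) (ccw_interval bm am))))).

Definition coherently_oriented (A B : 'M[int]_2) : Prop :=
  I_plus_exists A B /\ I_minus_exists A B.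

Definition well_oriented (A B : 'M[int]_2) : Prop :=
  coherently_oriented A B /\ ~ coherently_oriented A (invmx B).

(* Main.v *)
Require Import Defs.
From HB Require Import structures.
From mathcomp Require Import all_boot all_order all_algebra.
From mathcomp Require Import ring lra zify.

Import Order.TTheory GRing.Theory Num.Theory.
Local Open Scope ring_scope.

Definition o0 : 'I_2 := @Ordinal 2 0 isT.
Definition o1 : 'I_2 := @Ordinal 2 1 isT.
Ltac fixidx i :=
  lazymatch i with
  | o0 => fail
  | o1 => fail
  | _ => let v := eval vm_compute in (nat_of_ord i) in
         lazymatch v with
         | 0%N => rewrite (_ : i = o0); [| apply: ord_inj; vm_compute; reflexivity]
         | 1%N => rewrite (_ : i = o1); [| apply: ord_inj; vm_compute; reflexivity]
         end
  end.
Ltac fixord := repeat match goal with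
 | |- context[@fun_of_matrix _ 2 2 _ ?i ?j] => first [fixidx i | fixidx j]
 end.



Lemma det2 (M : 'M[int]_2) : \det M = M o0 o0 * M o1 o1 - M o0 o1 * M o1 o0.
Proof.
rewrite (expand_det_row _ 0) !big_ord_recl big_ord0 /cofactor /=.
rewrite !det_mx11 !mxE /bump /=. fixord. rewrite /= expr0 expr1; ring.
Qed.
Lemma tr2 (M : 'M[int]_2) : \tr M = M o0 o0 + M o1 o1.
Proof. rewrite /mxtrace !big_ord_recl big_ord0 addr0. fixord. by []. Qed.
Lemma mul2 (M N : 'M[int]_2) i j : (M *m N) i j = M i o0 * N o0 j + M i o1 * N o1 j.
Proof. rewrite mxE !big_ord_recl big_ord0 addr0. fixord. by []. Qed.

Lemma trsq (M : 'M[int]_2) : \tr (M *m M) = \tr M ^+ 2 - 2 * \det M.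
Proof. rewrite det2 !tr2 !mul2; ring. Qed.
Lemma trABB (M N : 'M[int]_2) : \tr (M *m N *m N) = \tr (M *m N) * \tr N - \tr M * \det N.
Proof. rewrite det2 !tr2 !mul2; ring. Qed.
Lemma tr3 (M : 'M[int]_2) : \tr (M ^+ 3) = \tr M ^+ 3 - 3 * \tr M * \det M.
Proof. rewrite !exprS expr0 mulr1 -!mulmxE det2 !tr2 !mul2; ring. Qed.
Lemma tr2' (M : 'M[int]_2) : \tr (M ^+ 2) = \tr M ^+ 2 - 2 * \det M.
Proof. by rewrite expr2 -mulmxE trsq. Qed.
Lemma key (a b t : int) : 2 <= a -> a < b -> b ^+ 2 - 2 < t ->
  2 <= `| t ^+ 3 - 3 * t - ((t * b - a) ^+ 2 - 2) |.
Proof.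
move=> ha hab ht.
have [->|htb] := eqVneq t (b^+2 - 1).
  have [hp|hn] := lerP 1 (b * (2 * a - b) - 2).
    have E : (b ^+ 2 - 1) ^+ 3 - 3 * (b ^+ 2 - 1) - (((b ^+ 2 - 1) * b - a) ^+ 2 - 2)
       = (b^+2 - 1) * (b * (2 * a - b) - 2) + 2 - a ^+ 2 by ring.
    rewrite E ger0_norm; last first.
      have : b^+2 - 1 <= (b^+2 - 1) * (b * (2 * a - b) - 2) by rewrite ler_peMr //; nia.
      nia.
    have : b^+2 - 1 <= (b^+2 - 1) * (b * (2 * a - b) - 2) by rewrite ler_peMr //; nia.
    nia.
  have E : (b ^+ 2 - 1) ^+ 3 - 3 * (b ^+ 2 - 1) - (((b ^+ 2 - 1) * b - a) ^+ 2 - 2)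
       = (b^+2 - 1) * (b * (2 * a - b) - 2) + 2 - a ^+ 2 by ring.
  have hn' : b * (2 * a - b) - 2 <= -1.
    have [h|h] := lerP 1 (2*a-b); first nia.
    have : b * (2 * a - b) <= 0 by nia. lia.
  have : (b^+2 - 1) * (b * (2 * a - b) - 2) <= - (b^+2 - 1).
    have h0 : 0 <= b^+2 - 1 by nia.
    nia.
  rewrite E ler0_norm; nia.
have htb' : b ^+ 2 <= t.
  have : b^+2 - 1 < t by rewrite lt_neqAle eq_sym htb /=; lia.
  lia.
have E : t ^+ 3 - 3 * t - ((t * b - a) ^+ 2 - 2) = t^+2 * (t - b^+2) + (2*a*b - 3) * t + 2 - a^+2 by ring.
have h1 : 0 <= t^+2 * (t - b^+2) by apply: mulr_ge0; [exact: sqr_ge0 | lia].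
have h2 : (2*a*b - 3) * b^+2 <= (2*a*b - 3) * t by apply: ler_wpM2l => //; nia.
have h3 : a^+2 <= b^+2 by rewrite !expr2; nia.
have h4 : b^+2 <= (2*a*b - 3) * b^+2 by rewrite ler_peMl ?sqr_ge0 //; nia.
rewrite E ger0_norm; lia.
Qed.

Theorem lemma7p1 (A B : 'M[int]_2) :
  SL2Z A -> SL2Z B ->
  A *m B != B *m A ->
  well_oriented A B ->
  2 <= \tr A -> \tr A < \tr B ->
  \tr (B *m B) < \tr (A *m B) ->
  2 <= `| \tr ((A *m B) ^+ 3) - \tr ((A *m B *m B) ^+ 2) |.
Proof.
rewrite /SL2Z => dA dB _ _ ha hab ht.
have dAB : \det (A *m B) = 1 by rewrite det_mulmx dA dB mulr1.
have dABB : \det (A *m B *m B) = 1 by rewrite det_mulmx dAB dB mulr1.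
rewrite tr3 tr2' dAB dABB trABB dB.
rewrite trsq dB in ht.
rewrite mulr1 in ht.
have := @key _ _ _ ha hab ht.
rewrite !mulr1 => h; exact: h.
Qed.
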